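(* Let $A$ be a torsion-free abelian group and $p$ a prime. Then $A$ has a homomorphic image isomorphic to $\bigoplus_{\aleph_0}\mathbb{Z}(p^\infty)$ (a direct sum of countably infinitely many copies of $\mathbb{Z}(p^\infty)$) if and only if $A$ has infinite (torsion-free) rank.
   Context: All groups are abelian; $\mathbb{Z}(p^\infty)$ is the quasi-cyclic $p$-group. *)

(* Defs.v *)
From HB Require Import structures.
From mathcomp Require Import all_boot all_order all_algebra archimedean.
From mathcomp Require Import ring_quotient.
From mathcomp Require Import boolp.
Set Implicit Arguments. Unset Strict Implicit. Unset Printing Implicit Defensive.
Import Order.TTheory GRing.Theory Num.Theory.
Local Open Scope ring_scope.

Definition torsion_free (A : zmodType) : Prop :=
  forall (x : A) (n : nat), x *+ n.+1 = 0 -> x = 0.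

Definition zindependent (A : zmodType) (n : nat) (x : 'I_n -> A) : Prop :=
  forall c : 'I_n -> int, \sum_(i < n) x i *~ c i = 0 -> forall i, c i = 0.

(* Infinite (torsion-free) rank: a maximal independent set is infinite,
   equivalently there are independent families of every finite size. *)
Definition infinite_rank (A : zmodType) : Prop :=
  forall n : nat, exists x : 'I_n -> A, zindependent x.

(* Finitely supported sequences of rationals (indexed by nat) are modelled
   by {poly rat}: the coefficient sequence of a polynomial.  The integer
   polynomials form the subgroup Z^(N).  Their quotient is the direct sum
   of countably many copies of Q/Z. *)
Definition int_poly_pred : {pred {poly rat}} :=
  fun q => q \is a polyOver (@Num.int rat).
Lemma int_poly_zmod : zmod_closed int_poly_pred.
Proof.
split; first exact: polyOver0.
move=> x y /polyOverP hx /polyOverP hy; apply/polyOverP => i.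
by rewrite coefB rpredB.
Qed.
HB.instance Definition _ := GRing.isZmodClosed.Build _ int_poly_pred int_poly_zmod.
Definition int_poly : zmodClosed {poly rat} := GRing.ZmodClosed.clone _ int_poly_pred _.
Definition QZsum := Quotient.quot int_poly.
(* The p-primary component of (+)_N Q/Z, i.e. (+)_N Z(p^oo) where
   Z(p^oo) is the p-primary component of Q/Z (the quasi-cyclic p-group). *)
Section Ptors.
Variable p : nat.
Definition ptorsion_pred : {pred QZsum} :=
  fun x => `[< exists k : nat, x *+ (p ^ k) = 0 >].
Lemma ptorsion_zmod : zmod_closed ptorsion_pred.
Proof.
split; first by apply/asboolP; exists 0%N; rewrite mul0rn.
move=> x y /asboolP [a ha] /asboolP [b hb]; apply/asboolP; exists (a + b)%N.
rewrite mulrnBl expnD mulrnA ha mul0rn mulnC mulrnA hb mul0rn.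
by rewrite subr0.
Qed.
HB.instance Definition _ := GRing.isZmodClosed.Build _ ptorsion_pred ptorsion_zmod.
Record Zpinf_sum := ZpinfSum { zpval : QZsum; _ : ptorsion_pred zpval }.
HB.instance Definition _ := [isSub for zpval].
HB.instance Definition _ := [Choice of Zpinf_sum by <:].
HB.instance Definition _ := [SubChoice_isSubZmodule of Zpinf_sum by <:].
End Ptors.

Definition has_Zpinf_sum_image (A : zmodType) (p : nat) : Prop :=
  exists f : {additive A -> Zpinf_sum p}, forall y, exists x, f x = y.

(* Main.v *)
Require Import Defs.
From HB Require Import structures.
From mathcomp Require Import all_boot all_order all_algebra.
From mathcomp Require Import ring_quotient generic_quotient boolp classical_sets.
Import GRing.Theory Num.Theory.
Local Open Scope ring_scope. Local Open Scope quotient_scope.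

Lemma reduce_rel (A : zmodType) (p : nat) (n : nat) (a : 'I_n -> A) :
  (1 < p)%N -> torsion_free A ->
  forall c : 'I_n -> int, \sum_(i < n) a i *~ c i = 0 -> (exists i, c i != 0) ->
  exists c' : 'I_n -> int, \sum_(i < n) a i *~ c' i = 0 /\
     exists i, ~~ (p%:Z %| c' i)%Z.
Proof.
move=> p1 tf c.
move: {2}(\sum_(i < n) `|c i|)%N (leqnn (\sum_(i < n) `|c i|)%N) => N.
elim: N c => [|N IH] c hN hs [i0 hi0].
  move: hN; rewrite leqn0 sum_nat_eq0 => /forallP /(_ i0) /=.
  by rewrite absz_eq0 (negbTE hi0).
have [[i hi]|] := pselect (exists i, ~~ (p%:Z %| c i)%Z).
  by exists c; split => //; exists i.
move=> /forallNP hall.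
have hd i : (p%:Z %| c i)%Z by apply/negPn/negP => /hall.
pose c' i := ((c i) %/ p%:Z)%Z.
have hc i : c i = c' i * p%:Z by rewrite divzK.
have hs' : \sum_(i < n) a i *~ c' i = 0.
  apply: (tf _ p.-1); rewrite prednK ?(ltnW p1) //.
  rewrite pmulrn mulrz_suml -[RHS]hs; apply: eq_bigr => i _.
  by rewrite -mulrzA -hc.
have hi0' : c' i0 != 0.
  by apply: contraNneq hi0; rewrite hc => ->; rewrite mul0r.
apply: (IH c') => //; last by exists i0.
rewrite -ltnS; apply: leq_trans hN.
rewrite (bigD1 i0) //= [X in (_ < X)%N](bigD1 i0) //=.
rewrite -addSn leq_add //.
  rewrite hc abszM /= -{1}(muln1 `|c' i0|%N) ltn_mul2l absz_gt0 hi0' /=.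
  by [].
apply: leq_sum => i _; rewrite hc abszM /=.
by rewrite leq_pmulr // (ltn_trans _ p1).
Qed.

Lemma piQ0 (q : {poly rat}) : (\pi_QZsum q = 0) <-> (q \is a polyOver (@Num.int rat)).
Proof.
have -> : (0 : QZsum) = \pi_QZsum 0 by rewrite raddf0.
split.
  move/eqP; rewrite -Quotient.idealrBE subr0. done.
move=> h; apply/eqP; rewrite -Quotient.idealrBE subr0; exact h.
Qed.

Lemma e_tors (p i : nat) : prime p ->
  ptorsion_pred p (\pi_QZsum ((p%:R : rat)^-1 *: 'X^i)).
Proof.
move=> pp; apply/asboolP; exists 1%N; rewrite expn1 -raddfMn /=.
apply/piQ0; rewrite scalerMnl -mulr_natr mulVf ?scale1r ?polyOverXn //.
by rewrite pnatr_eq0 -lt0n prime_gt0.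
Qed.

Definition e_gen (p : nat) (pp : prime p) (i : nat) : Zpinf_sum p :=
  @ZpinfSum p _ (@e_tors p i pp).

Lemma int_div_p (p : nat) (c : int) : (0 < p)%N ->
  ((p%:R : rat)^-1 *~ c) \is a Num.int -> (p%:Z %| c)%Z.
Proof.
move=> p0 /intrP [m hm]; apply/dvdzP; exists m.
apply: (@intr_inj rat); rewrite intrM -hm mulrzAl -[p%:~R]/(p%:R) mulVf ?mul1rz //.
by rewrite pnatr_eq0 -lt0n.
Qed.

Lemma forward (A : zmodType) (p : nat) : prime p -> torsion_free A ->
  has_Zpinf_sum_image A p -> infinite_rank A.
Proof.
move=> pp tf [f fs] n; apply: contrapT => hn.
have [a ha] := choice (fun i : 'I_n => fs (e_gen p pp i)).
have : ~ zindependent a by move=> hi; apply: hn; exists a.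
move=> /existsNP [c /existsNP [hc /existsNP [i0 hi0]]].
have [c' [hs [j hj]]] := @reduce_rel A p n a (prime_gt1 pp) tf c hc (ex_intro _ i0 (introN eqP hi0)).
move: hs => /(congr1 f); rewrite raddf0 raddf_sum.
under eq_bigr => i _ do rewrite raddfMz ha.
move=> /(congr1 val); rewrite raddf_sum raddf0 /=.
have zpMz (x : Zpinf_sum p) k : zpval (x *~ k) = zpval x *~ k.
  exact: (raddfMz \val).
under eq_bigr => i _ do rewrite zpMz /= -(raddfMz (\pi_QZsum)).
rewrite -(raddf_sum (\pi_QZsum)) /= => /piQ0 /polyOverP /(_ j).
rewrite coef_sum (bigD1 j) //= big1 ?addr0.
  by rewrite coefMrz coefZ coefXn eqxx mulr1 => /(@int_div_p p _ (prime_gt0 pp)) hd; by rewrite hd in hj.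
by move=> i hij; rewrite coefMrz coefZ coefXn eq_sym (inj_eq val_inj) (negbTE hij) mulr0 mul0rz.
Qed.

Lemma aux_elim (M : zmodType) (S1 S0 X : M) (bL b0 : int) :
  (S1 + X *~ bL) *~ b0 - (S0 + X *~ b0) *~ bL = S1 *~ b0 - S0 *~ bL.
Proof. by rewrite !mulrzDl_tmp mulrzAC opprD addrACA subrr addr0. Qed.

Lemma dep_lemma (A : zmodType) (k : nat) : forall (x : 'I_k -> A) (y : 'I_k.+1 -> A),
  (forall j, exists m : int, m != 0 /\
     exists c : 'I_k -> int, y j *~ m = \sum_(i < k) x i *~ c i) ->
  exists e : 'I_k.+1 -> int, \sum_(j < k.+1) y j *~ e j = 0 /\ exists j, e j != 0.
Proof.
elim: k => [|k IH] x y h.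
  have [m [hm [c hc]]] := h ord0.
  exists (fun _ => m); split; last by exists ord0.
  by rewrite big_ord1 hc big_ord0.
have h' : forall j, exists q : int * ('I_k.+1 -> int), q.1 != 0 /\
     y j *~ q.1 = \sum_(i < k.+1) x i *~ q.2 i.
  by move=> j; have [m [hm [c hc]]] := h j; exists (m, c).
have [mc hmc] := choice h'.
pose m j := (mc j).1; pose c j := (mc j).2; pose b j := c j ord_max.
pose x' (i : 'I_k) := x (widen_ord (leqnSn k) i).
have hy j : y j *~ m j = \sum_(i < k) x' i *~ c j (widen_ord (leqnSn k) i)
     + x ord_max *~ b j.
  by have [_ ->] := hmc j; rewrite big_ord_recr.
have hm j : m j != 0 by have [] := hmc j.
have [[j0 hb0]|] := pselect (exists j0, b j0 != 0); last first.
  move=> /forallNP hb.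
  have hb' j : b j = 0 by apply/eqP/negP => /negP /hb.
  pose y' (j : 'I_k.+1) := y (widen_ord (leqnSn k.+1) j).
  have hy' : forall j, exists mm : int, mm != 0 /\
     exists cc : 'I_k -> int, y' j *~ mm = \sum_(i < k) x' i *~ cc i.
    move=> j; exists (m (widen_ord (leqnSn k.+1) j)); split; first exact: hm.
    exists (fun i => c (widen_ord (leqnSn k.+1) j) (widen_ord (leqnSn k) i)).
    by rewrite /y' hy hb' mulr0z addr0.
  have [e' [he' [j1 hj1]]] := IH x' y' hy'.
  exists (fun J : 'I_k.+2 => if (J < k.+1)%N then e' (inord J) else 0); split.
    rewrite big_ord_recr /= ltnn mulr0z addr0 -[RHS]he'.
    by apply: eq_bigr => j _; rewrite /= ltn_ord inord_val.
  by exists (widen_ord (leqnSn k.+1) j1); rewrite /= ltn_ord inord_val.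
pose z (j : 'I_k.+1) := y (lift j0 j) *~ (m (lift j0 j) * b j0)
   - y j0 *~ (m j0 * b (lift j0 j)).
have hz : forall j, exists mm : int, mm != 0 /\
     exists cc : 'I_k -> int, z j *~ mm = \sum_(i < k) x' i *~ cc i.
  move=> j; exists 1; split => //.
  exists (fun i => c (lift j0 j) (widen_ord (leqnSn k) i) * b j0
                  - c j0 (widen_ord (leqnSn k) i) * b (lift j0 j)).
  rewrite mulr1z /z !mulrzA !hy aux_elim !mulrz_suml -sumrB.
  by apply: eq_bigr => i _; rewrite mulrzBr !mulrzA.
have [e' [he' [j1 hj1]]] := IH x' z hz.
exists (fun J => if unlift j0 J is Some j then e' j * (m (lift j0 j) * b j0)
         else - \sum_(j < k.+1) e' j * (m j0 * b (lift j0 j))).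
split; last first.
  exists (lift j0 j1); rewrite (liftK j0 j1).
  by rewrite !mulf_neq0.
rewrite (bigD1_ord j0) //= unlift_none -[RHS]he'.
have hl : forall i : 'I_k.+1, unlift j0 (lift j0 i) = Some i := liftK j0.
rewrite [X in _ + X](eq_bigr (fun i => y (lift j0 i) *~ (e' i * (m (lift j0 i) * b j0)))); last first.
  by move=> i _; rewrite hl.
rewrite /z [RHS](eq_bigr (fun j => y (lift j0 j) *~ (e' j * (m (lift j0 j) * b j0))
    - y j0 *~ (e' j * (m j0 * b (lift j0 j))))); last first.
  by move=> j _; rewrite mulrzBl -!mulrzA !(mulrC (e' j)).
by rewrite sumrB -mulrz_sumr mulrNz addrC.
Qed.

Lemma key_lemma (A : zmodType) : infinite_rank A -> forall s : seq A,
  exists a : A, forall (m : int) (c : nat -> int),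
    a *~ m = \sum_(i < size s) s`_i *~ c i -> m = 0.
Proof.
move=> hr s; apply: contrapT => /forallNP hn.
have h : forall a : A, exists m : int, m != 0 /\
     exists c : 'I_(size s) -> int, a *~ m = \sum_(i < size s) s`_i *~ c i.
  move=> a; have /existsNP [m /existsNP [c hc]] := hn a.
  exists m; split; last first.
    by exists (fun i => c i); apply: contrapT => hc'; apply: hc => /hc'.
  by apply/negP => /eqP hm; apply: hc.
have [y hy] := hr (size s).+1.
have [e [he [j hj]]] := @dep_lemma A (size s) (fun i : 'I_(size s) => s`_i) y (fun j => h (y j)).
by move: (hy e he j) hj => ->; rewrite eqxx.
Qed.

Section Seq.
Variables (A : zmodType) (hr : infinite_rank A).

Definition nextA (s : seq A) : A := proj1_sig (cid (@key_lemma A hr s)).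

Fixpoint build (n : nat) : seq A :=
  if n is n'.+1 then rcons (build n') (nextA (build n')) else [::].

Definition xs (j : nat) : A := nextA (build j).

Lemma size_build n : size (build n) = n.
Proof. by elim: n => //= n IH; rewrite size_rcons IH. Qed.

Lemma nth_build n j : (j < n)%N -> (build n)`_j = xs j.
Proof.
elim: n => // n IH; rewrite ltnS leq_eqVlt => /orP [/eqP ->|hj] /=.
  by rewrite nth_rcons size_build ltnn eqxx.
by rewrite nth_rcons size_build hj IH.
Qed.

Lemma xs_spec n m (c : nat -> int) :
  xs n *~ m = \sum_(i < n) xs i *~ c i -> m = 0.
Proof.
move=> h; move: (proj2_sig (cid (@key_lemma A hr (build n)))) => H.
apply: (H m c); transitivity (xs n *~ m); first by [].
rewrite h -(big_mkord xpredT (fun i => (build n)`_i *~ c i)) size_build big_mkord.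
by apply: eq_bigr => i _; rewrite nth_build.
Qed.

Lemma xs_indep n (c : nat -> int) : \sum_(i < n) xs i *~ c i = 0 ->
  forall i, (i < n)%N -> c i = 0.
Proof.
elim: n c => // n IH c; rewrite big_ord_recr /= => hs.
have hn : c n = 0.
  apply: (@xs_spec n (c n) (fun i => - c i)).
  rewrite (eq_bigr (fun i : 'I_n => - (xs i *~ c i))) => [|i _]; last by rewrite mulrNz.
  by rewrite sumrN; apply/eqP; rewrite -addr_eq0 addrC hs.
move: hs; rewrite hn mulr0z addr0 => /IH hi i; rewrite ltnS leq_eqVlt.
by case/orP => [/eqP ->|]; [| apply: hi].
Qed.

End Seq.

From mathcomp Require Import ring.

Lemma piQeq (q1 q2 : {poly rat}) : (q1 - q2) \is a polyOver (@Num.int rat) ->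
  \pi_QZsum q1 = \pi_QZsum q2.
Proof. by move=> /piQ0; rewrite raddfB => /eqP; rewrite subr_eq0 => /eqP. Qed.

Section D.
Variables (p : nat) (pp : prime p).
Local Notation D := (Zpinf_sum p).

Lemma zpMn (x : D) n : zpval (x *+ n) = zpval x *+ n.
Proof. exact: (raddfMn \val). Qed.
Lemma zpMz (x : D) n : zpval (x *~ n) = zpval x *~ n.
Proof. exact: (raddfMz \val). Qed.

Lemma zp_sum N (F : 'I_N -> D) :
  zpval (\sum_(i < N) F i) = \sum_(i < N) zpval (F i).
Proof. exact: (raddf_sum \val). Qed.

Lemma D_tors (y : D) : exists k, (repr (zpval y)) *+ (p ^ k) \is a polyOver (@Num.int rat).
Proof.
case: y => v /= /asboolP [k hk]; exists k; apply/piQ0.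
by rewrite raddfMn /= reprK.
Qed.

Lemma p_neq0 : (p%:R : rat) != 0.
Proof. by rewrite pnatr_eq0 -lt0n prime_gt0. Qed.

Lemma D_div (y : D) (n : nat) : (0 < n)%N -> exists z : D, z *+ n = y.
Proof.
move=> n0; have [k hk] := D_tors y; set q := repr (zpval y) in hk.
set e := logn p n; set u := (n`_p^')%N.
have hn : n = (p ^ e * u)%N by rewrite -p_part partnC.
have cop : coprime u (p ^ k).
  rewrite coprime_sym; apply: (@pnat_coprime p); last exact: part_pnat.
  by rewrite pnatX pnat_id.
have [t [v htv]] := Bezoutz u (p ^ k)%N.
have htv' : t * u%:Z + v * (p ^ k)%N%:Z = 1.
  by rewrite htv /gcdz /= (eqP cop).
pose r : rat := t%:~R / (p ^ e)%:R.
have pe0 : ((p ^ e)%N%:R : rat) != 0 by rewrite natrX expf_neq0 // p_neq0.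
have hz : ptorsion_pred p (\pi_QZsum (r *: q)).
  apply/asboolP; exists (k + e)%N; rewrite -raddfMn; apply/piQ0.
  rewrite scalerMnl -mulr_natr.
  have -> : r * (p ^ (k + e))%:R = t%:~R * (p ^ k)%:R.
    by rewrite /r expnD natrM; field.
  rewrite -scalerA scaler_nat; apply: polyOverZ => //; exact: intr_int.
exists (ZpinfSum hz); apply: val_inj; change (zpval (ZpinfSum hz *+ n) = zpval y); rewrite zpMn /=.
rewrite [RHS](_ : _ = \pi_QZsum q); last by rewrite reprK.
rewrite -raddfMn; apply: piQeq.
have -> : (r *: q) *+ n - q = (- v%:~R) *: (q *+ (p ^ k)).
  rewrite -!scaler_nat !scalerA -[X in _ - X]scale1r -scalerBl.
  congr (_ *: _); rewrite -mulr_natr /r hn natrM.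
  have h1 : (1 : rat) = t%:~R * u%:R + v%:~R * (p ^ k)%:R.
    by rewrite -[u%:R]/(u%:~R) -[(p ^ k)%:R]/((p ^ k)%N%:~R) -!intrM -intrD htv'.
  rewrite (_ : 1 * _ * _ = t%:~R * u%:R); last by field.
  by rewrite [X in _ - X = _]h1 opprD addrA subrr add0r mulNr.
by apply: polyOverZ => //; rewrite rpredN intr_int.
Qed.

Lemma pk_neq0 k : ((p ^ k)%N%:R : rat) != 0.
Proof. by rewrite natrX expf_neq0 // p_neq0. Qed.

Lemma g_tors i k : ptorsion_pred p (\pi_QZsum (((p ^ k)%N%:R : rat)^-1 *: 'X^i)).
Proof.
apply/asboolP; exists k; rewrite -raddfMn; apply/piQ0.
by rewrite -scaler_nat scalerA divff ?scale1r ?polyOverXn // pk_neq0.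
Qed.

Definition g i k : D := ZpinfSum (g_tors i k).

Lemma D_repr (y : D) : exists (k N : nat) (nn : nat -> int),
  y = \sum_(i < N) g i k *~ nn i.
Proof.
have [k hk] := D_tors y; set q := repr (zpval y) in hk.
have h : forall i, exists m : int, (q *+ p ^ k)`_i = m%:~R.
  by move=> i; apply/intrP; move/polyOverP: hk; apply.
have [nn hnn] := choice h.
exists k, (size q), nn; apply: val_inj.
change (zpval y = zpval (\sum_(i < size q) g i k *~ nn i)).
rewrite zp_sum.
under eq_bigr => i _ do rewrite zpMz /= -(raddfMz (\pi_QZsum)).
rewrite -(raddf_sum (\pi_QZsum)) /= -[LHS]reprK -/q; congr (\pi_QZsum _).
rewrite -[LHS]coefK poly_def; apply: eq_bigr => i _.
rewrite scalerMzl; congr (_ *: _).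
have := hnn i; rewrite coefMn => hi.
rewrite -mulrzl -hi -[q`_i *+ _]mulr_natr -mulrA divff ?mulr1 //; exact: pk_neq0.
Qed.

End D.

Set Implicit Arguments. Unset Strict Implicit.
Section Ext.
Local Open Scope classical_set_scope.
Variables (A D : zmodType).
Hypothesis hdiv : forall (y : D) (n : nat), (0 < n)%N -> exists z, z *+ n = y.

Definition subgrp (G : set (A * D)) :=
  G (0, 0) /\ forall u v, G u -> G v -> G (u.1 - v.1, u.2 - v.2).
Definition functional (G : set (A * D)) := forall d, G (0, d) -> d = 0.

Lemma subgrpN G a e : subgrp G -> G (a, e) -> G (- a, - e).
Proof. by case=> h0 hs h; move: (hs _ _ h0 h); rewrite /= !sub0r. Qed.

Lemma subgrpD G a e b f : subgrp G -> G (a, e) -> G (b, f) -> G (a + b, e + f).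
Proof.
move=> hG ha hb; have := subgrpN hG hb; case: hG => _ hs /(hs _ _ ha).
by rewrite /= !opprK.
Qed.

Lemma subgrpMn G a e n : subgrp G -> G (a, e) -> G (a *+ n, e *+ n).
Proof.
move=> hG ha; elim: n => [|n IH]; first by rewrite !mulr0n; case: hG.
by rewrite !mulrS; apply: subgrpD.
Qed.

Lemma subgrpMz G a e (k : int) : subgrp G -> G (a, e) -> G (a *~ k, e *~ k).
Proof.
move=> hG ha; case: k => n; first by rewrite -!pmulrn; apply: subgrpMn.
by rewrite NegzE !mulrNz -!pmulrn; apply: subgrpN => //; apply: subgrpMn.
Qed.

Lemma compat G a : subgrp G -> functional G ->
  exists dd : D, forall (k : int) e, G (a *~ k, e) -> e = dd *~ k.
Proof.
move=> hG hF.
have [[n0 hn0]|hno] := pselect (exists n, (0 < n)%N /\ exists e, G (a *+ n, e)).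
  pose P n := `[< (0 < n)%N /\ exists e, G (a *+ n, e) >].
  have exP : exists n, P n by exists n0; apply/asboolP.
  case: (ex_minnP exP) => n /asboolP [n0' [en hen]] hmin.
  have [dd hdd] := hdiv en n0'.
  exists dd => k e hke.
  have nz : (n%:Z != 0) by rewrite eqz_nat -lt0n.
  have hk := divz_eq k n%:Z.
  set qq := (k %/ n%:Z)%Z in hk; set rr := (k %% n%:Z)%Z in hk.
  have hr0 : (0 <= rr) by apply: modz_ge0.
  have hrn : (rr < n%:Z) by apply: ltz_pmod; rewrite ltz_nat.
  have hG' : G (a *~ rr, e - en *~ qq).
    have := subgrpMz qq hG hen; case: hG => _ hs /(hs _ _ hke) /=.
    rewrite pmulrn -mulrzA -mulrzBr => h.
    have -> : rr = k - n%:Z * qq by rewrite {1}hk mulrC addrAC subrr add0r.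
    exact: h.
  have rr0 : rr = 0.
    apply: contrapT => hne.
    have hpos : (0 < `|rr|)%N by rewrite absz_gt0; apply/eqP.
    have : P `|rr|%N.
      apply/asboolP; split => //; exists (e - en *~ qq).
      by rewrite pmulrn gez0_abs.
    move/hmin; rewrite leqNgt => /negP; apply.
    by rewrite -ltz_nat gez0_abs.
  move: hG'; rewrite rr0 mulr0z => /hF /eqP; rewrite subr_eq0 => /eqP ->.
  rewrite -hdd pmulrn -mulrzA; congr (_ *~ _).
  by rewrite [RHS]hk rr0 addr0 mulrC.
exists 0 => k e hke.
rewrite mul0rz.
have [k0|kn0] := eqVneq k 0.
  by move: hke; rewrite k0 mulr0z => /hF.
exfalso; apply: hno; exists `|k|%N; split; first by rewrite absz_gt0.
have [kp|kn] := lerP 0 k.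
  by exists e; rewrite pmulrn gez0_abs.
exists (- e); rewrite pmulrn ltz0_abs // mulrNz.
by apply: subgrpN.
Qed.

Lemma extend G a : subgrp G -> functional G ->
  exists G', subgrp G' /\ functional G' /\ G `<=` G' /\ exists e, G' (a, e).
Proof.
move=> hG hF; have [dd hdd] := compat a hG hF.
pose G' := fun u : A * D => exists s e (k : int), G (s, e) /\ u = (s + a *~ k, e + dd *~ k).
have hG'0 : G' (0, 0).
  by exists 0, 0, 0; split; [case: hG | rewrite !mulr0z !addr0].
exists G'; split; [split => // | split; [|split]].
- move=> u v [s1 [e1 [k1 [h1 ->]]]] [s2 [e2 [k2 [h2 ->]]]] /=.
  exists (s1 - s2), (e1 - e2), (k1 - k2); split.
    by case: hG => _ hs; apply: (hs (s1, e1) (s2, e2)).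
  by rewrite !mulrzBr !opprD (addrACA s1) (addrACA e1).
- move=> d [s [e [k [hse heq]]]]; case: heq => hs hd.
  have hs' : s = a *~ (- k) by rewrite mulrNz; apply/eqP; rewrite -addr_eq0 -hs.
  rewrite hd; move: hse; rewrite hs' => /hdd ->.
  by rewrite mulrNz addNr.
- move=> [s e] hse; exists s, e, 0; split => //.
  by rewrite !mulr0z !addr0.
- exists dd, 0, 0, 1; split; first by case: hG.
  by rewrite !add0r !mulr1z.
Qed.

Lemma zorn_total (B G0 : set (A * D)) : subgrp G0 -> functional G0 -> B `<=` G0 ->
  exists G, subgrp G /\ functional G /\ B `<=` G /\ forall a, exists e, G (a, e).
Proof.
move=> hG0 hF0 hB0.
pose good G := subgrp G /\ functional G /\ B `<=` G.
pose P G := G = set0 \/ good G.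
have [M [PM Mmax]] : exists M, P M /\ forall B', M `<` B' -> ~ P B'.
  apply: Zorn_bigcup => F FP Ftot.
  have [[X0 [FX0 [u0 X0u0]]]|no] := pselect (exists X, F X /\ exists u, X u); last first.
    left; apply/seteqP; split => u //= [X FX Xu].
    by exfalso; apply: no; exists X; split => //; exists u.
  have goodX X : F X -> forall u, X u -> good X.
    move=> FX u Xu; case: (FP X FX) => // X0e.
    by move: Xu; rewrite X0e.
  have [[g00 gs] [gf gb]] := goodX X0 FX0 u0 X0u0.
  right; split; [split|split].
  - by exists X0.
  - move=> u v [X1 FX1 X1u] [X2 FX2 X2v].
    have [s12|s21] := Ftot X1 X2 FX1 FX2.
      have [[_ hs] _] := goodX X2 FX2 v X2v.
      by exists X2 => //; apply: hs => //; apply: s12.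
    have [[_ hs] _] := goodX X1 FX1 u X1u.
    by exists X1 => //; apply: hs => //; apply: s21.
  - by move=> d [X FX Xd]; have [_ [hf _]] := goodX X FX _ Xd; apply: hf.
  - by move=> u Bu; exists X0 => //; apply: gb.
have goodM : good M.
  case: PM => // M0; exfalso; apply: (Mmax G0); last by right.
  rewrite M0; split => // h.
  by case: hG0 => h0 _; have := h _ h0.
case: goodM => hM [hFM hBM].
exists M; split => //; split => //; split => // a.
apply: contrapT => hna.
have [G' [hG' [hF' [hMG' [e he]]]]] := extend a hM hFM.
apply: (Mmax G'); last by right; split => //; split => //; move=> u /hBM /hMG'.
split => // h; apply: hna; exists e; exact: h.
Qed.

End Ext.


Section Backward.
Local Open Scope classical_set_scope.
Variables (A : zmodType) (p : nat) (pp : prime p) (hr : infinite_rank A).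
Local Notation D := (Zpinf_sum p).

Definition dd (j : nat) : D :=
  match (unpickle j : option (nat * nat)) with
  | Some (i, k) => @g p pp i k
  | None => 0
  end.

Lemma dd_pickle i k : dd (pickle (i, k)) = @g p pp i k.
Proof. by rewrite /dd pickleK. Qed.

Lemma sum_ext (M : zmodType) (F : nat -> M) (c : nat -> int) N1 N :
  (N1 <= N)%N ->
  \sum_(i < N1) F i *~ c i = \sum_(i < N) F i *~ (if (i < N1)%N then c i else 0).
Proof.
move=> hN; rewrite (big_ord_widen N (fun i => F i *~ c i) hN) big_mkcond /=.
by apply: eq_bigr => i _; case: ifP => _; rewrite ?mulr0z.
Qed.

Lemma sum_single (M : zmodType) (F : nat -> M) j :
  \sum_(i < j.+1) F i *~ (nat_of_ord i == j)%:Z = F j.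
Proof.
rewrite big_ord_recr /= eqxx mulr1z big1 ?add0r // => i _.
by rewrite ltn_eqF // mulr0z.
Qed.

Definition xsA := @xs A hr.

Definition G0 : set (A * D) := fun u => exists N (c : nat -> int),
  u = (\sum_(i < N) xsA i *~ c i, \sum_(i < N) dd i *~ c i).

Definition Bset : set (A * D) := fun u => exists j, u = (xsA j, dd j).

Lemma G0_subgrp : subgrp G0.
Proof.
split.
  by exists 0%N, (fun _ => 0); rewrite !big_ord0.
move=> u v [N1 [c1 ->]] [N2 [c2 ->]] /=.
exists (N1 + N2)%N, (fun i => (if (i < N1)%N then c1 i else 0) - (if (i < N2)%N then c2 i else 0)).
rewrite (sum_ext xsA c1 (leq_addr N2 N1)) (sum_ext xsA c2 (leq_addl N1 N2)).
rewrite (sum_ext dd c1 (leq_addr N2 N1)) (sum_ext dd c2 (leq_addl N1 N2)).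
rewrite -!sumrB; congr pair; apply: eq_bigr => i _; by rewrite mulrzBr.
Qed.

Lemma G0_functional : functional G0.
Proof.
move=> d [N [c heq]]; case: heq => h1 ->.
have hc := @xs_indep A hr N c (esym h1).
by rewrite big1 // => i _; rewrite hc // mulr0z.
Qed.

Lemma B_G0 : Bset `<=` G0.
Proof.
move=> u [j ->]; exists j.+1, (fun i => (i == j)%:Z).
by rewrite !sum_single.
Qed.

Lemma backward : has_Zpinf_sum_image A p.
Proof.
have hdiv : forall (y : D) (n : nat), (0 < n)%N -> exists z, z *+ n = y.
  by move=> y n; apply: D_div.
have [M [hM [hFM [hBM htot]]]] := zorn_total hdiv G0_subgrp G0_functional B_G0.
pose f (a : A) : D := proj1_sig (cid (htot a)).
have hf a : M (a, f a) := proj2_sig (cid (htot a)).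
have uniq a e1 e2 : M (a, e1) -> M (a, e2) -> e1 = e2.
  move=> h1 h2; case: hM => _ hs; have := hs _ _ h1 h2; rewrite /= subrr.
  by move/hFM/eqP; rewrite subr_eq0 => /eqP.
have fB : GRing.zmod_morphism f.
  move=> a b; apply: (uniq (a - b)); first exact: hf.
  by case: hM => _ hs; apply: (hs (a, f a) (b, f b)).
pose F : {additive A -> D} := HB.pack f (GRing.isZmodMorphism.Build A D f fB).
exists F => y.
have [k [N [nn ->]]] := @D_repr p pp y.
exists (\sum_(i < N) xsA (pickle (i, k)) *~ nn i).
rewrite raddf_sum; apply: eq_bigr => i _; rewrite raddfMz; congr (_ *~ _).
rewrite -dd_pickle; apply: (uniq (xsA (pickle (i, k)))); first exact: hf.
by apply: hBM; exists (pickle (i, k)).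
Qed.

End Backward.

Theorem proposition3p5 (A : zmodType) (p : nat) :
  prime p -> torsion_free A ->
  (has_Zpinf_sum_image A p <-> infinite_rank A).
Proof.
move=> pp tf; split; first exact: forward.
by move=> hr; apply: backward.
Qed.
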